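(* Let $A$ be a commutative ring, $S=A[x_0,\dots,x_d]$, and identify $P_{S|A}=S\otimes_AS$ with $A[\boldsymbol{x},\boldsymbol{y}]$ where $x_i=x_i\otimes1$, $y_i=1\otimes x_i$. For each $n\geqslant0$, let $\Delta^{[n+1]}_{S|A}=((y_0-x_0)^{n+1},\dots,(y_d-x_d)^{n+1})$ and $P^{[n]}_{S|A}=P_{S|A}/\Delta^{[n+1]}_{S|A}$. Then the maps \[ H^{d+1}(\Delta^{[n+1]}_{S|A};\,P_{S|A})\xrightarrow{\ \gamma_n\ }\operatorname{Hom}_S(P^{[n]}_{S|A},S)\xrightarrow{\ \varrho^*\ } D^{[n]}_{S|A} \] are isomorphisms of $P_{S|A}$-modules.
   Context: $H^{d+1}(\Delta^{[n+1]}_{S|A};P_{S|A})$ is the top Koszul cohomology on the elements $(y_i-x_i)^{n+1}$, which equals $P^{[n]}_{S|A}$. $P_{S|A}$ is an $S$-module via $s\mapsto s\otimes1$; $P^{[n]}_{S|A}$ is a free $S$-module with basis $(y_0-x_0)^{a_0}\cdots(y_d-x_d)^{a_d}$, $0\le a_i\le n$, and $\operatorname{Hom}_S(P^{[n]}_{S|A},S)$ has the dual basis, denoted $(\cdot)^\star$. The map $\gamma_n$ is the $S$-linear map sending $(y_0-x_0)^{a_0}\cdots(y_d-x_d)^{a_d}$ to $\big((y_0-x_0)^{n-a_0}\cdots(y_d-x_d)^{n-a_d}\big)^\star$. $P_{S|A}$ acts on $\operatorname{End}_A(S)$ and on $\operatorname{Hom}_S(P^{[n]}_{S|A},S)$ via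 $(s_1\otimes s_2)\cdot\delta=\tilde s_1\circ\delta\circ\tilde s_2$ (resp. the natural action). $D^{[n]}_{S|A}$ is the set of elements of $\operatorname{End}_A(S)$ annihilated by $\Delta^{[n+1]}_{S|A}$ under this action. $\varrho:S\to P^{[n]}_{S|A}$ is $s\mapsto 1\otimes s$, and $\varrho^*(\delta)=\delta\circ\varrho$. *)

(* Defs.v *)
From HB Require Import structures.
From mathcomp Require Import all_boot all_order all_algebra.
From mathcomp Require Import mpoly.
Set Implicit Arguments. Unset Strict Implicit. Unset Printing Implicit Defensive.
Import GRing.Theory.
Local Open Scope ring_scope.

(* Conventions.  k = d+1 is the number of variables x_0,...,x_d.
   S  = A[x_0..x_d]                       : {mpoly A[k]}
   P  = S (x) _A S = A[x,y] realised as S[y_0..y_d] : {mpoly S[k]},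
        with x_i = ('X_i : S)%:MP (a coefficient) and y_i = 'X_i.
   The S-module structure of P via s |-> s (x) 1 is coefficient scaling
   ( *: ), i.e. multiplication by s(x). *)

Notation Spoly A k := {mpoly A[k]}.
Notation Ppoly A k := {mpoly {mpoly A[k]}[k]}.

Section Defs.
Context (A : comRingType) (k : nat).

Definition xP (i : 'I_k) : Ppoly A k := ('X_i : Spoly A k)%:MP.
Definition yP (i : 'I_k) : Ppoly A k := 'X_i.

Definition inDelta (n : nat) (p : Ppoly A k) : Prop :=
  exists c : 'I_k -> Ppoly A k,
    p = \sum_(i < k) c i * (yP i - xP i) ^+ n.+1.

Definition rho (s : Spoly A k) : Ppoly A k :=
  mmap (fun a : A => (a%:MP : Spoly A k)%:MP) (fun i => yP i) s.

(* change of variables: q(x,y) |-> q(x, y + x); the coefficient of y^b in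
   tau q (as an element of S) is the coefficient of (y-x)^b in q. *)
Definition tau (q : Ppoly A k) : Ppoly A k :=
  mmap (fun c : Spoly A k => c%:MP) (fun i => yP i + xP i) q.

Definition mcompl (n : nat) (a : 'X_{1..k}) : 'X_{1..k} :=
  [multinom (n - a i)%N | i < k].

(* gamma_n : P^[n] -> Hom_S(P^[n], S), the S-linear map sending
   (y-x)^a to ((y-x)^(n-a))^*, for 0 <= a_i <= n; written on representatives
   p in P of classes of P^[n] (p = sum_a s_a (y-x)^a mod Delta^[n+1] with
   s_a = (tau p)@_a), and with homomorphisms realised as maps P -> S. *)
Definition gamma (n : nat) (p : Ppoly A k) : Ppoly A k -> Spoly A k :=
  fun q => \sum_(a <- msupp (tau p) | [forall i, (a i <= n)%N])
              (tau p)@_a * (tau q)@_(mcompl n a).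

(* Hom_S(P^[n], S), realised as the S-linear maps P -> S vanishing on
   Delta^[n+1] (S acting on P via s |-> s (x) 1). *)
Definition SHom (n : nat) (phi : Ppoly A k -> Spoly A k) : Prop :=
  (forall (c : Spoly A k) (p q : Ppoly A k), phi (c *: p + q) = c * phi p + phi q)
  /\ (forall p, inDelta n p -> phi p = 0).

Definition actHom (p : Ppoly A k) (phi : Ppoly A k -> Spoly A k) :
  Ppoly A k -> Spoly A k := fun q => phi (p * q).

Definition Alinear (delta : Spoly A k -> Spoly A k) : Prop :=
  forall (a : A) (s t : Spoly A k), delta (a *: s + t) = a *: delta s + delta t.

(* P-action on End_A(S): (s1 (x) s2) . delta = s1 o delta o s2; for
   p = sum_m c_m(x) y^m this is  s |-> sum_m c_m * delta (x^m * s). *)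
Definition actEnd (p : Ppoly A k) (delta : Spoly A k -> Spoly A k) :
  Spoly A k -> Spoly A k :=
  fun s => \sum_(m <- msupp p) p@_m * delta ('X_[m] * s).

Definition Dn (n : nat) (delta : Spoly A k -> Spoly A k) : Prop :=
  Alinear delta /\
  (forall p, inDelta n p -> forall s, actEnd p delta s = 0).

Definition rhostar (phi : Ppoly A k -> Spoly A k) : Spoly A k -> Spoly A k :=
  fun s => phi (rho s).

End Defs.

(* Main.v *)
Require Import Defs.
From HB Require Import structures.
From mathcomp Require Import all_boot all_order all_algebra.
From mathcomp Require Import mpoly.
From mathcomp Require Import zify.
From mathcomp.multinomials Require Import ssrcomplements.
Set Implicit Arguments. Unset Strict Implicit. Unset Printing Implicit Defensive.
Import GRing.Theory.
Local Open Scope ring_scope.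

Section H.
Context (A : comRingType) (k n : nat).
Local Notation S := {mpoly A[k]}.
Local Notation P := {mpoly S[k]}.

Definition Nm : 'X_{1..k} := [multinom n | i < k].
Definition tinv (q : P) : P :=
  mmap (fun c : S => c%:MP) (fun i => yP A i - xP A i) q.

Lemma tau_rM : multiplicative (@tau A k).
Proof. exact: (@mmap_is_multiplicative k S P (fun i => yP A i + xP A i) (@mpolyC k S)). Qed.
Lemma tinv_rM : multiplicative tinv.
Proof. exact: (@mmap_is_multiplicative k S P (fun i => yP A i - xP A i) (@mpolyC k S)). Qed.
HB.instance Definition _ := GRing.isAdditive.Build P P (@tau A k)
  (@mmap_is_additive k S P (fun i => yP A i + xP A i) (@mpolyC k S)).
HB.instance Definition _ := GRing.isMultiplicative.Build P P (@tau A k) tau_rM.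
HB.instance Definition _ := GRing.isAdditive.Build P P tinv
  (@mmap_is_additive k S P (fun i => yP A i - xP A i) (@mpolyC k S)).
HB.instance Definition _ := GRing.isMultiplicative.Build P P tinv tinv_rM.

Lemma tauC c : tau (c%:MP : P) = c%:MP.
Proof. exact: mmapC. Qed.
Lemma tinvC c : tinv (c%:MP : P) = c%:MP.
Proof. exact: mmapC. Qed.
Lemma tauX i : tau ('X_i : P) = 'X_i + xP A i.
Proof. by rewrite /tau mmapX mmap1U. Qed.
Lemma tinvX i : tinv ('X_i : P) = 'X_i - xP A i.
Proof. by rewrite /tinv mmapX mmap1U. Qed.
Lemma tauZ c (q : P) : tau (c *: q) = c *: tau q.
Proof. by rewrite -mul_mpolyC rmorphM /= tauC mul_mpolyC. Qed.
Lemma tinvZ c (q : P) : tinv (c *: q) = c *: tinv q.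
Proof. by rewrite -mul_mpolyC rmorphM /= tinvC mul_mpolyC. Qed.

Lemma rmorph_id (g : {rmorphism P -> P}) :
  (forall c, g c%:MP = c%:MP) -> (forall i, g 'X_i = 'X_i) -> forall q, g q = q.
Proof.
move=> gC gX q; rewrite [q in RHS]mpolyE [q in LHS]mpolyE rmorph_sum; apply: eq_bigr => m _.
rewrite -mul_mpolyC rmorphM gC mpolyXE_id rmorph_prod; congr (_ * _).
by apply: eq_bigr => i _; rewrite rmorphXn gX.
Qed.

Lemma tinvK (q : P) : tinv (tau q) = q.
Proof.
have := @rmorph_id (tinv \o (@tau A k)); apply => [c|i] /=.
  by rewrite tauC tinvC.
by rewrite tauX rmorphD /= tinvX /xP tinvC subrK.
Qed.
Lemma tauK (q : P) : tau (tinv q) = q.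
Proof.
have := @rmorph_id ((@tau A k) \o tinv); apply => [c|i] /=.
  by rewrite tinvC tauC.
by rewrite tinvX rmorphB /= tauX /xP tauC addrK.
Qed.


Lemma mcoeffMX_gen (t : P) a m :
  (t * 'X_[a])@_m = if (a <= m)%MM then t@_(m - a) else 0.
Proof.
case: ifP => le.
  by rewrite -[m in LHS](submK le) addmC mcoeffMX.
rewrite [t]mpolyE mulr_suml raddf_sum /= big1 // => b _.
rewrite -scalerAl -mpolyXD mcoeffZ mcoeffX.
case: eqP => [E|]; last by rewrite mulr0.
by move: le; rewrite -E lem_addl.
Qed.

Lemma lemNm (a : 'X_{1..k}) : (a <= Nm)%MM = [forall i, (a i <= n)%N].
Proof.
apply/mnm_lepP/forallP => H i; move: (H i); by rewrite mnmE.
Qed.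

Lemma mcomplE a : mcompl n a = (Nm - a)%MM.
Proof. by apply/mnmP => i; rewrite mnmBE !mnmE. Qed.

Lemma gammaE (p q : P) : gamma n p q = (tau p * tau q)@_Nm.
Proof.
rewrite /gamma [tau p in RHS]mpolyE mulr_suml raddf_sum big_mkcond /=.
apply: eq_bigr => a _.
rewrite -scalerAl mcoeffZ (mulrC 'X_[a]) mcoeffMX_gen lemNm mcomplE.
by case: ifP; rewrite ?mulr0.
Qed.

Definition inDY (t : P) := exists c : 'I_k -> P, t = \sum_(i < k) c i * 'X_i ^+ n.+1.

Lemma DYcoef t r : inDY t -> (r * t)@_Nm = 0.
Proof.
case=> c ->; rewrite mulr_sumr raddf_sum /= big1 // => i _.
rewrite mulrA mpolyXn mcoeffMX_gen ifF //.
apply/negP => /mnm_lepP/(_ i); by rewrite mulmnE mnm1E eqxx mnmE mul1n ltnn.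
Qed.

Lemma TDelta q : inDelta n q -> inDY (tau q).
Proof.
case=> c ->; exists (fun i => tau (c i)); rewrite rmorph_sum; apply: eq_bigr => i _.
by rewrite rmorphM rmorphXn rmorphB /= /yP /xP tauX tauC addrK.
Qed.

Lemma DYDelta t : inDY t -> inDelta n (tinv t).
Proof.
case=> c ->; exists (fun i => tinv (c i)); rewrite rmorph_sum; apply: eq_bigr => i _.
by rewrite rmorphM rmorphXn /= tinvX.
Qed.

Lemma DY0 : inDY 0.
Proof. by exists (fun _ => 0); rewrite big1 // => i _; rewrite mul0r. Qed.

Lemma DYD t1 t2 : inDY t1 -> inDY t2 -> inDY (t1 + t2).
Proof.
case=> c1 -> [c2 ->]; exists (fun i => c1 i + c2 i); rewrite -big_split.
by apply: eq_bigr => i _; rewrite mulrDl.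
Qed.

Lemma DYM t r : inDY t -> inDY (r * t).
Proof.
case=> c ->; exists (fun i => r * c i); rewrite mulr_sumr.
by apply: eq_bigr => i _; rewrite mulrA.
Qed.

Lemma DYX i : inDY ('X_i ^+ n.+1).
Proof.
exists (fun j => (j == i)%:R); rewrite (bigD1 i) //= eqxx mul1r big1 ?addr0 //.
by move=> j /negbTE ->; rewrite mul0r.
Qed.

Lemma Trunc0 (t : P) : (forall a, (a <= Nm)%MM -> t@_a = 0) -> inDY t.
Proof.
move=> H; rewrite [t]mpolyE; apply: (big_ind inDY DY0 DYD) => m _.
case: (boolP [exists i, (n < m i)%N]) => [/existsP [i Hi] | /existsPn Hn]; last first.
  have -> : t@_m = 0.
    apply: H; apply/mnm_lepP => i; rewrite mnmE.
    by move: (Hn i); rewrite -leqNgt.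
  by rewrite scale0r; exact: DY0.
have le : (U_(i) *+ n.+1 <= m)%MM.
  apply/mnm_lepP => j; rewrite mulmnE mnm1E.
  by case: eqP => [<-|_]; rewrite ?mul1n ?mul0n.
rewrite -(submK le) mpolyXD scalerAl -mpolyXn; exact: DYM (DYX i).
Qed.


Section SH.
Variable phi : P -> S.
Hypothesis h : SHom n phi.
Lemma SHom0 : phi 0 = 0.
Proof.
case: h => _ H; apply: H; exists (fun _ => 0); rewrite big1 // => i _; by rewrite mul0r.
Qed.
Lemma SHomZ c p : phi (c *: p) = c * phi p.
Proof. by case: h => H _; have := H c p 0; rewrite addr0 SHom0 addr0. Qed.
Lemma SHomD p q : phi (p + q) = phi p + phi q.
Proof. by case: h => H _; have := H 1 p q; rewrite scale1r mul1r. Qed.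
Lemma SHom_sum (I : Type) (r : seq I) (F : I -> P) :
  phi (\sum_(i <- r) F i) = \sum_(i <- r) phi (F i).
Proof. exact: (big_morph phi SHomD SHom0). Qed.
End SH.

Lemma NmK a : (a <= Nm)%MM -> (Nm - (Nm - a))%MM = a.
Proof.
move=> le; apply/mnmP => i; rewrite !mnmBE mnmE subKn //.
by move/mnm_lepP: le => /(_ i); rewrite mnmE.
Qed.

End H.

Section H.
Context (A : comRingType) (k n : nat).
Local Notation S := {mpoly A[k]}.
Local Notation P := {mpoly S[k]}.
Local Notation Nm := (@Nm k n).
Local Notation inDY := (@inDY A k n).

Lemma p1a (p : P) : SHom n (gamma n p).
Proof.
split => [c q r | q Hq]; rewrite !gammaE.
  by rewrite rmorphD /= tauZ mulrDr -scalerAr mcoeffD mcoeffZ.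
exact: DYcoef (TDelta Hq).
Qed.

Lemma p1b (p : P) : inDelta n p -> forall q, gamma n p q = 0.
Proof. by move=> Hp q; rewrite gammaE mulrC; exact: DYcoef (TDelta Hp). Qed.

Lemma p1c (p1 p2 q : P) : gamma n (p1 + p2) q = gamma n p1 q + gamma n p2 q.
Proof. by rewrite !gammaE rmorphD /= mulrDl mcoeffD. Qed.

Lemma p1d (r p q : P) : gamma n (r * p) q = actHom r (gamma n p) q.
Proof.
rewrite /actHom !gammaE !rmorphM /=.
by rewrite [in RHS]mulrCA mulrA.
Qed.

Lemma p1e (p : P) : (forall q, gamma n p q = 0) -> inDelta n p.
Proof.
move=> H; rewrite -(tinvK p); apply: DYDelta; apply: Trunc0 => a le.
have := H (tinv 'X_[Nm - a]); rewrite gammaE tauK mcoeffMX_gen lem_subr NmK //.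
Qed.

Local Notation B := {ffun 'I_k -> 'I_n.+1}.
Definition am (f : B) : 'X_{1..k} := [multinom (f i : nat) | i < k].
Lemma am_le f : (am f <= Nm)%MM.
Proof. by apply/mnm_lepP => i; rewrite !mnmE -ltnS ltn_ord. Qed.
Lemma am_inj : injective am.
Proof.
move=> f g /mnmP E; apply/ffunP => i; apply/val_inj; have := E i; by rewrite !mnmE.
Qed.
Lemma am_surj a : (a <= Nm)%MM -> am [ffun i => inord (a i)] = a.
Proof.
move=> le; apply/mnmP=> i; rewrite mnmE ffunE inordK //.
by move/mnm_lepP: le => /(_ i); rewrite mnmE ltnS.
Qed.
Definition cmp (f : B) : B := [ffun i => rev_ord (f i)].
Lemma cmpK : involutive cmp.
Proof. by move=> f; apply/ffunP => i; rewrite !ffunE rev_ordK. Qed.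
Lemma cmp_am f : am (cmp f) = (Nm - am f)%MM.
Proof. by apply/mnmP => i; rewrite mnmBE !mnmE ffunE /= subSS. Qed.

Lemma Decomp (t : P) : inDY (t - \sum_(f : B) t@_(am f) *: 'X_[am f]).
Proof.
apply: Trunc0 => a le; rewrite mcoeffB raddf_sum /= (bigD1 [ffun i => inord (a i)]) //=.
rewrite am_surj // mcoeffZ mcoeffX eqxx mulr1 big1 ?addr0 ?subrr // => g ne.
rewrite mcoeffZ mcoeffX; case: eqP => [E|]; last by rewrite mulr0.
by rewrite -(am_surj le) in E; rewrite (am_inj E) eqxx in ne.
Qed.

Lemma SHom_split (phi : P -> S) (h : SHom n phi) x y : inDelta n y -> phi (x + y) = phi x.
Proof. by move=> Hy; rewrite (SHomD h) (proj2 h y Hy) addr0. Qed.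

Lemma p1f (phi : P -> S) : SHom n phi -> exists p, forall q, gamma n p q = phi q.
Proof.
move=> h.
pose tp := \sum_(f : B) phi (tinv 'X_[(Nm - am f)%MM]) *: ('X_[am f] : P).
exists (tinv tp) => q; rewrite gammaE tauK.
rewrite mulr_suml raddf_sum /=.
have Hq : q = tinv (\sum_(f : B) (tau q)@_(am f) *: 'X_[am f])
            + tinv (tau q - \sum_(f : B) (tau q)@_(am f) *: 'X_[am f]).
  by rewrite -raddfD /= addrC subrK tinvK.
rewrite [in RHS]Hq.
rewrite (SHom_split h _ (DYDelta (Decomp _))).
rewrite rmorph_sum /= (SHom_sum h).
rewrite (reindex_inj (inv_inj cmpK)) /=; apply: eq_bigr => f _.
rewrite -scalerAl mcoeffZ (mulrC 'X_[_]) mcoeffMX_gen am_le cmp_am NmK ?am_le //.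
by rewrite tinvZ (SHomZ h) mulrC.
Qed.

End H.

Section H2.
Context (A : comRingType) (k n : nat).
Local Notation S := {mpoly A[k]}.
Local Notation P := {mpoly S[k]}.

Lemma rho_rM : multiplicative (@rho A k).
Proof. exact: (@mmap_is_multiplicative k A P (fun i => yP A i) ((@mpolyC k S) \o (@mpolyC k A))). Qed.
HB.instance Definition _ := GRing.isAdditive.Build S P (@rho A k)
  (@mmap_is_additive k A P (fun i => yP A i) ((@mpolyC k S) \o (@mpolyC k A))).
HB.instance Definition _ := GRing.isMultiplicative.Build S P (@rho A k) rho_rM.

Lemma rho_def s : rho s = mmap ((@mpolyC k S) \o (@mpolyC k A)) (fun i => yP A i) s.
Proof. by []. Qed.

Lemma rhoX m : rho ('X_[m] : S) = ('X_[m] : P).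
Proof. by rewrite rho_def mmapX; exact: mmap1_id. Qed.

Lemma rhoE s : rho s = \sum_(m <- msupp s) (s@_m)%:MP *: ('X_[m] : P).
Proof. by rewrite /rho /mmap; apply: eq_bigr => m _; rewrite mul_mpolyC mmap1_id. Qed.

Lemma rhoZ a s : rho (a *: s) = (a%:MP : S) *: rho s.
Proof. by rewrite rho_def mmapZ /= mul_mpolyC. Qed.

Lemma R2 (phi : P -> S) (h : SHom n phi) (p : P) s :
  actEnd p (rhostar phi) s = phi (p * rho s).
Proof.
rewrite /actEnd /rhostar [p in RHS]mpolyE mulr_suml (SHom_sum h).
apply: eq_bigr => m _; by rewrite rmorphM /= rhoX -scalerAl (SHomZ h).
Qed.

Lemma p2a (phi : P -> S) : SHom n phi -> Dn n (rhostar phi).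
Proof.
move=> h; split.
  move=> a s t; rewrite /rhostar rmorphD /= rhoZ.
  by rewrite (proj1 h) mul_mpolyC.
move=> p Hp s; rewrite (R2 h); apply: (proj2 h).
case: Hp => c ->; exists (fun i => c i * rho s); rewrite mulr_suml.
by apply: eq_bigr => i _; rewrite mulrAC.
Qed.

Lemma p2c (r : P) (phi : P -> S) : SHom n phi ->
  forall s, rhostar (actHom r phi) s = actEnd r (rhostar phi) s.
Proof. by move=> h s; rewrite (R2 h). Qed.

Lemma p2d (phi psi : P -> S) : SHom n phi -> SHom n psi ->
  (forall s, rhostar phi s = rhostar psi s) -> forall q, phi q = psi q.
Proof.
move=> h1 h2 H q.
have E : forall chi, SHom n chi ->
    chi q = \sum_(m <- msupp q) q@_m * rhostar chi 'X_[m].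
  move=> chi hc; rewrite [q in LHS]mpolyE (SHom_sum hc); apply: eq_bigr => m _.
  by rewrite (SHomZ hc) /rhostar rhoX.
by rewrite (E _ h1) (E _ h2); apply: eq_bigr => m _; rewrite H.
Qed.

Lemma actEnd_w (p : P) (de : S -> S) s b : (msize p <= b)%N ->
  actEnd p de s = \sum_(m : 'X_{1..k < b}) p@_m * de ('X_[m] * s).
Proof.
move=> le; pose I : subFinType _ := 'X_{1..k < b}.
rewrite /actEnd (big_mksub I) ?msupp_uniq //=; first last.
  by move=> x /msize_mdeg_lt /leq_trans; apply.
rewrite big_rmcond //= => j /memN_msupp_eq0 ->.
by rewrite mul0r.
Qed.

Lemma p2e (de : S -> S) : Dn n de ->
  exists phi : P -> S, SHom n phi /\ forall s, rhostar phi s = de s.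
Proof.
case=> hA hD.
have d0 : de 0 = 0.
  by have := hA (-1) 0 0; rewrite scaler0 addr0 scaleN1r addNr.
have dD : forall s t, de (s + t) = de s + de t.
  by move=> s t; have := hA 1 s t; rewrite !scale1r.
have dZ : forall a s, de (a *: s) = a *: de s.
  by move=> a s; have := hA a s 0; rewrite addr0 d0 addr0.
have hphi : SHom n (fun q : P => actEnd q de 1).
  split => [c p q | p Hp]; last exact: hD p Hp 1.
  pose b := (msize (c *: p + q) + msize p + msize q)%N.
  have [l1 l2 l3] : [/\ (msize (c *: p + q) <= b)%N, (msize p <= b)%N & (msize q <= b)%N].
    by rewrite /b; split; lia.
  rewrite !(@actEnd_w _ _ _ b) //.
  rewrite mulr_sumr -big_split; apply: eq_bigr => m _.
  by rewrite mcoeffD mcoeffZ mulrDl mulrA.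
exists (fun q : P => actEnd q de 1); split; first exact: hphi.
move=> s.
rewrite /rhostar rhoE (SHom_sum hphi) [s in RHS]mpolyE.
rewrite (big_morph de dD d0); apply: eq_bigr => m _.
rewrite (SHomZ hphi) dZ /actEnd msuppX big_seq1 mcoeffX eqxx mul1r mulr1.
by rewrite mul_mpolyC.
Qed.

End H2.

Unset Implicit Arguments.
Theorem proposition3p1 (A : comRingType) (d n : nat) :
  let k := d.+1 in
  (* gamma_n is a well-defined isomorphism of P-modules P^[n] -> Hom_S(P^[n],S) *)
  ((forall p : Ppoly A k, SHom n (gamma n p)) /\
   (forall p : Ppoly A k, inDelta n p -> forall q, gamma n p q = 0) /\
   (forall (p1 p2 : Ppoly A k) q, gamma n (p1 + p2) q = gamma n p1 q + gamma n p2 q) /\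
   (forall (r p : Ppoly A k) q, gamma n (r * p) q = actHom r (gamma n p) q) /\
   (forall p : Ppoly A k, (forall q, gamma n p q = 0) -> inDelta n p) /\
   (forall phi : Ppoly A k -> Spoly A k, SHom n phi ->
      exists p, forall q, gamma n p q = phi q)) /\
  (* varrho^* is an isomorphism of P-modules Hom_S(P^[n],S) -> D^[n]_{S|A} *)
  ((forall phi : Ppoly A k -> Spoly A k, SHom n phi -> Dn n (rhostar phi)) /\
   (forall phi psi : Ppoly A k -> Spoly A k, SHom n phi -> SHom n psi ->
      forall s, rhostar (fun q => phi q + psi q) s = rhostar phi s + rhostar psi s) /\
   (forall (r : Ppoly A k) (phi : Ppoly A k -> Spoly A k), SHom n phi ->
      forall s, rhostar (actHom r phi) s = actEnd r (rhostar phi) s) /\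
   (forall phi psi : Ppoly A k -> Spoly A k, SHom n phi -> SHom n psi ->
      (forall s, rhostar phi s = rhostar psi s) -> forall q, phi q = psi q) /\
   (forall delta : Spoly A k -> Spoly A k, Dn n delta ->
      exists phi, SHom n phi /\ forall s, rhostar phi s = delta s)).
Proof.
move=> k; split.
- split; first exact: p1a. split; first exact: p1b.
  split; first exact: p1c. split; first exact: p1d.
  split; first exact: p1e. exact: p1f.
- split; first exact: p2a. split; first by [].
  split; first by move=> r phi h; exact: p2c h.
  split; first exact: p2d. exact: p2e.
Qed.
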